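(* Let $(X,r)$ be a non-degenerate involutive set-theoretic solution with $|X|=n$, identified with $\{1,\dots,n\}$, and let $(\mathcal{X}^2,\tilde r)$ be the induced pair. If $(X,r)$ is of class $m$ with $m>1$, then $(\mathcal{X}^2,\tilde r)$ is also of class $m$.
   Context: A set-theoretic solution is $r:X\times X\to X\times X$, $r(x,y)=(\sigma_x(y),\gamma_y(x))$, with $r^{12}r^{23}r^{12}=r^{23}r^{12}r^{23}$; non-degenerate: all $\sigma_x,\gamma_x$ bijective; involutive: $r\circ r=\mathrm{Id}$. Induced pair: $\mathcal{X}^2=\{T_i^k:1\le i,k\le n\}$ ($n^2$ symbols), $\tilde r(T_i^k,T_j^l)=(g_i^k(T_j^l),f_j^l(T_i^k))$ where $g_i^k(T_j^l)=T_{\sigma_i(j)}^{\sigma_k(l)}$ and $f_j^l(T_i^k)=T_{\gamma_j(i)}^{\gamma_l(k)}$; this is a non-degenerate involutive solution whose maps ''$\sigma$'' are the $g_i^k$. Class: for a non-degenerate involutive solution with maps $\sigma_x$, let $D(x)=\sigma_x^{-1}(x)$; the solution is of class $m$ if $m$ is the minimal natural number such that $\sigma_x\sigma_{D(x)}\sigma_{D^2(x)}\cdots\sigma_{D^{m-1}(x)}=\mathrm{Id}$ for every element $x$. *)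

(* Defs.v *)
From mathcomp Require Import all_boot.
Set Implicit Arguments. Unset Strict Implicit. Unset Printing Implicit Defensive.

Section YBE.
Variable T : finType.
Implicit Types (r : T * T -> T * T).

Definition sigma r (x y : T) : T := (r (x, y)).1.
Definition gamma r (y x : T) : T := (r (x, y)).2.

Definition r12 r (t : T * T * T) : T * T * T :=
  let: (x, y, z) := t in let: (a, b) := r (x, y) in (a, b, z).
Definition r23 r (t : T * T * T) : T * T * T :=
  let: (x, y, z) := t in let: (b, c) := r (y, z) in (x, b, c).

Definition is_set_solution r : Prop :=
  forall t, r12 r (r23 r (r12 r t)) = r23 r (r12 r (r23 r t)).

Definition non_degenerate r : Prop :=
  forall x, bijective (sigma r x) /\ bijective (gamma r x).

Definition involutive_sol r : Prop := forall p, r (r p) = p.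

(* D(x) = sigma_x^{-1}(x)  (well defined for non-degenerate r) *)
Definition Dmap r (x : T) : T := odflt x [pick y | sigma r x y == x].

Definition sigma_chain r (k : nat) (x : T) : T -> T :=
  foldr (fun i f => sigma r (iter i (Dmap r) x) \o f) id (iota 0 k).

Definition class_cond r (k : nat) : Prop :=
  forall x y, sigma_chain r k x y = y.

Definition is_class r (m : nat) : Prop :=
  [/\ 0 < m, class_cond r m & forall k, 0 < k < m -> ~ class_cond r k].

End YBE.

(* induced pair on X^2 = {T_i^k} encoded as pairs (i,k) *)
Definition induced (T : finType) (r : T * T -> T * T)
  (p : (T * T) * (T * T)) : (T * T) * (T * T) :=
  let: ((i, k), (j, l)) := p in
  ((sigma r i j, sigma r k l), (gamma r j i, gamma r l k)).

(* Main.v *)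
Require Import Defs.
From mathcomp Require Import all_boot.

Section Aux.
Variable T : finType.
Variable r : T * T -> T * T.
Hypothesis nd : non_degenerate r.

Lemma sigma_ind (i k j l : T) :
  sigma (induced r) (i, k) (j, l) = (sigma r i j, sigma r k l).
Proof. by []. Qed.

Lemma Dmap_spec x : sigma r x (Dmap r x) = x.
Proof.
rewrite /Dmap; case: pickP => [y /eqP //|H].
have [f _ fK] := (nd x).1.
by move: (H (f x)); rewrite fK eqxx.
Qed.

Lemma Dmap_uniq x y : sigma r x y = x -> y = Dmap r x.
Proof.
move=> Hy; have [f K _] := (nd x).1.
by rewrite -(K y) -(K (Dmap r x)) Dmap_spec Hy.
Qed.

Lemma Dmap_ind i k : Dmap (induced r) (i, k) = (Dmap r i, Dmap r k).
Proof.
rewrite {1}/Dmap; case: pickP => [[y1 y2] /eqP|H].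
  rewrite sigma_ind => -[H1 H2].
  by rewrite -(Dmap_uniq _ _ H1) -(Dmap_uniq _ _ H2).
by move: (H (Dmap r i, Dmap r k)); rewrite sigma_ind !Dmap_spec eqxx.
Qed.

Lemma iter_ind n i k :
  iter n (Dmap (induced r)) (i, k) = (iter n (Dmap r) i, iter n (Dmap r) k).
Proof. by elim: n => [|n IH] //=; rewrite IH Dmap_ind. Qed.

Lemma chain_ind s i k j l :
  foldr (fun n f => sigma (induced r) (iter n (Dmap (induced r)) (i, k)) \o f)
    id s (j, l) =
  (foldr (fun n f => sigma r (iter n (Dmap r) i) \o f) id s j,
   foldr (fun n f => sigma r (iter n (Dmap r) k) \o f) id s l).
Proof. by elim: s => [|a s IH] //=; rewrite IH iter_ind sigma_ind. Qed.

Lemma class_cond_ind c : class_cond (induced r) c <-> class_cond r c.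
Proof.
split=> H.
  move=> x y; have := H (x, x) (y, y).
  by rewrite /sigma_chain chain_ind => -[].
move=> [i k] [j l]; rewrite /sigma_chain chain_ind.
by have := H i j; have := H k l; rewrite /sigma_chain => -> ->.
Qed.
End Aux.

Theorem lemma3p5 (n : nat) (r : 'I_n * 'I_n -> 'I_n * 'I_n) (m : nat) :
  is_set_solution r -> non_degenerate r -> involutive_sol r ->
  1 < m -> is_class r m -> is_class (induced r) m.
Proof.
move=> _ nd _ _ [H0 Hc Hmin]; split=> //.
  idtac.
exact: (proj2 (@class_cond_ind _ _ nd m) Hc).
by move=> k Hk /(@class_cond_ind _ _ nd k); apply: Hmin.
Qed.
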